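(* If $f \in R$ satisfies $v(f) > a_n$, then $f \in \mathfrak m^2$.
   Context: Let $k$ be a field and let $(R,\mathfrak m)$ be a complete local noetherian domain of dimension $1$ containing $k$ with $R/\mathfrak m = k$, with normalization $\overline R$ having residue field $k$, so $\overline R = k[[t]]$ and $R \subseteq k[[t]]$ is finite birational. Let $v$ be the $t$-adic valuation, $v(0)=\infty$. For $A \subseteq k((t))$ let $v(A) = \{v(f): f\in A\setminus\{0\}\}$. The Herzog–Kunz sequence of $R$ is $v(\mathfrak m)\setminus v(\mathfrak m^2)$ listed increasingly as $a_1 < \cdots < a_n$. *)

(* Defs.v *)
From Stdlib Require List.
From mathcomp Require Import all_boot all_algebra.
Set Implicit Arguments. Unset Strict Implicit. Unset Printing Implicit Defensive.
Import GRing.Theory.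
Local Open Scope ring_scope.

Definition pseries (k : fieldType) := nat -> k.

Definition ps_const (k : fieldType) (c : k) : pseries k :=
  fun n => if n == 0%N then c else 0.
Definition ps_add (k : fieldType) (f g : pseries k) : pseries k := fun n => f n + g n.
Definition ps_opp (k : fieldType) (f : pseries k) : pseries k := fun n => - f n.
Definition ps_mul (k : fieldType) (f g : pseries k) : pseries k :=
  fun n => \sum_(i < n.+1) f i * g (n - i)%N.
Definition ps_zero (k : fieldType) : pseries k := fun _ => 0.

(* t-adic valuation: is_val f n  <->  f <> 0 and v(f) = n *)
Definition is_val (k : fieldType) (f : pseries k) (n : nat) : Prop :=
  f n != 0 /\ forall i, (i < n)%N -> f i = 0.

(* R is a k-subalgebra of k[[t]] with nonzero conductor (t^c k[[t]] ⊆ R):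
   exactly the complete local 1-dim domains containing k with residue
   field k whose normalization is k[[t]] (finite, birational). *)
Record analytic_branch (k : fieldType) (R : pseries k -> Prop) : Prop := {
  ab_const : forall c : k, R (ps_const c);
  ab_add : forall f g, R f -> R g -> R (ps_add f g);
  ab_opp : forall f, R f -> R (ps_opp f);
  ab_mul : forall f g, R f -> R g -> R (ps_mul f g);
  ab_conductor : exists c : nat, forall f : pseries k,
      (forall i, (i < c)%N -> f i = 0) -> R f
}.

Definition max_ideal (k : fieldType) (R : pseries k -> Prop) (f : pseries k) : Prop :=
  R f /\ f 0%N = 0.

Definition max_ideal_sq (k : fieldType) (R : pseries k -> Prop) (f : pseries k) : Prop :=
  exists s : seq (pseries k * pseries k),
    (forall p, List.In p s -> max_ideal R p.1 /\ max_ideal R p.2) /\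
    f = foldr (fun p acc => ps_add (ps_mul p.1 p.2) acc) (@ps_zero k) s.

Definition in_vals (k : fieldType) (A : pseries k -> Prop) (n : nat) : Prop :=
  exists f, A f /\ is_val f n.

Definition herzog_kunz (k : fieldType) (R : pseries k -> Prop) (a : nat) : Prop :=
  in_vals (max_ideal R) a /\ ~ in_vals (max_ideal_sq R) a.

(* Main.v *)
Require Import Defs.
From mathcomp Require Import all_boot all_algebra zify.
From Stdlib Require Import Classical FunctionalExtensionality.
Local Open Scope ring_scope.
Import GRing.Theory.

Section S.
Variable k : fieldType.
Implicit Types f g h : pseries k.

Definition vanish (a : nat) (f : pseries k) := forall i, (i < a)%N -> f i = 0.

Lemma mul_vanish a b f g : vanish a f -> vanish b g -> vanish (a + b) (ps_mul f g).
Proof.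
move=> hf hg n hn; rewrite /ps_mul big1 // => i _.
case: (ltnP i a) => hi; first by rewrite hf // mul0r.
rewrite hg ?mulr0 //; have := ltn_ord i; lia.
Qed.

Lemma foldr_vanish a (s : seq (pseries k * pseries k)) :
  (forall p, List.In p s -> vanish a p.1 /\ vanish a p.2) ->
  vanish (a + a) (foldr (fun p acc => ps_add (ps_mul p.1 p.2) acc) (@ps_zero k) s).
Proof.
elim: s => [|p s IH] hs i hi /=; first by [].
have [h1 h2] := hs p (or_introl erefl).
rewrite /ps_add (@mul_vanish a a _ _ h1 h2 i) // IH ?addr0 // => q hq.
exact: hs (or_intror hq).
Qed.

Variable R : pseries k -> Prop.
Hypothesis hR : analytic_branch R.

Lemma sq_R f : max_ideal_sq R f -> R f.
Proof.
case=> s [hs ->]; elim: s hs => [|p s IH] hs /=.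
  have -> : @ps_zero k = ps_const 0.
    by apply: functional_extensionality => n; rewrite /ps_const /ps_zero; case: (n == 0%N).
  exact: ab_const.
have [[h1 _] [h2 _]] := hs p (or_introl erefl).
apply: ab_add hR _ _ (ab_mul hR h1 h2) _.
by apply: IH => q hq; apply: hs (or_intror hq).
Qed.

Lemma sq_add f g : max_ideal_sq R f -> max_ideal_sq R g -> max_ideal_sq R (ps_add f g).
Proof.
case=> s [hs ->] [t [ht ->]]; exists (s ++ t); split.
  by move=> p hp; case: (List.in_app_or _ _ _ hp) => ?; [apply: hs|apply: ht].
elim: s {hs} => [|p s IH] /=.
  by apply: functional_extensionality => n; rewrite /ps_add /ps_zero add0r.
rewrite /= -IH; apply: functional_extensionality => n; by rewrite /ps_add addrA.
Qed.

Definition scale (c : k) f : pseries k := fun n => c * f n.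

Lemma mul_const c f : ps_mul (ps_const c) f = scale c f.
Proof.
apply: functional_extensionality => n; rewrite /ps_mul /scale big_ord_recl /= subn0.
rewrite big1 ?addr0 // => i _; by rewrite /ps_const /= mul0r.
Qed.

Lemma sq_scale c f : max_ideal_sq R f -> max_ideal_sq R (scale c f).
Proof.
case=> s [hs ->]; exists (map (fun p => (ps_mul (ps_const c) p.1, p.2)) s); split.
  move=> p /List.in_map_iff [q [<- hq]] /=; have [[h1 h1'] h2] := hs q hq.
  split=> //; split; first by exact: (ab_mul hR (ab_const hR c) h1).
  by rewrite mul_const /scale h1' mulr0.
elim: s {hs} => [|p s IH] /=.
  by apply: functional_extensionality => n; rewrite /scale /ps_zero mulr0.
rewrite -IH mul_const; apply: functional_extensionality => n.
rewrite /scale /ps_add /ps_mul mulrDr; congr (_ + _).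
by rewrite mulr_sumr; apply: eq_bigr => i _; rewrite mulrA.
Qed.

Lemma conductor_vanish : exists c, (0 < c)%N /\ forall f, vanish c f -> R f.
Proof.
have [c hc] := ab_conductor hR; exists c.+1; split => // f hf; apply: hc => i hi.
by apply: hf; lia.
Qed.

Lemma HK_nonempty : exists a, herzog_kunz R a.
Proof.
have [c [c0 hc]] := conductor_vanish.
pose u : pseries k := fun n => if n == c then 1 else 0.
suff : forall N n h, (n <= N)%N -> max_ideal R h -> h n != 0 -> exists a, herzog_kunz R a.
  move/(_ c c u (leqnn c)); apply.
    split; last by rewrite /u; case: eqP => // h; lia.
    apply: hc => i hi; rewrite /u; case: eqP => //; lia.
  by rewrite /u eqxx oner_neq0.
elim=> [|N IH] n h hn hm hh.
  have n0 : n = 0%N by lia.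
  by move: hh; rewrite n0 hm.2 eqxx.
case: (classic (exists i h', (i < n)%N /\ max_ideal R h' /\ h' i != 0)).
  case=> i [h' [hi [hm' hh']]]; apply: (IH i h') => //; lia.
move=> hno.
have van : forall h', max_ideal R h' -> vanish n h'.
  move=> h' hm' i hi; apply/eqP; apply: contraT => hne; case: hno.
  by exists i, h'.
have n0 : (0 < n)%N.
  by case: n hn hh {hno van} => // hh; move: hh; rewrite hm.2 eqxx.
exists n; split; first by exists h; split => //; split => //; apply: van.
case=> g [[s [hs ->]] [hg _]]; move: hg.
have hv : vanish (n + n) (foldr (fun p acc => ps_add (ps_mul p.1 p.2) acc) (@ps_zero k) s).
  by apply: foldr_vanish => p hp; have [h1 h2] := hs p hp; split; apply: van.
by rewrite hv ?eqxx //; lia.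
Qed.

Definition Q (j : nat) := forall f, R f -> vanish j f ->
  (forall a, herzog_kunz R a -> (a < j)%N) -> max_ideal_sq R f.

Lemma Q_base c : (0 < c)%N -> (forall f, vanish c f -> R f) -> forall j, (c + c <= j)%N -> Q j.
Proof.
move=> c0 hc j hj f _ hf _.
pose u : pseries k := fun n => if n == c then 1 else 0.
pose w : pseries k := fun n => f (n + c)%N.
exists [:: (u, w)]; split.
  move=> p [<-|[]] /=; split; split.
  - by apply: hc => i hi; rewrite /u; case: eqP => //; lia.
  - by rewrite /u; case: eqP => //; lia.
  - by apply: hc => i hi; rewrite /w hf //; lia.
  - by rewrite /w hf //; lia.
apply: functional_extensionality => n; rewrite /= /ps_add /ps_zero addr0 /ps_mul.
case: (ltnP n c) => hn.
  by rewrite hf ?big1 //; [move=> i _; rewrite /u; case: eqP => [e|]; [have := ltn_ord i; lia|rewrite mul0r] | lia].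
have hcn : (c < n.+1)%N by lia.
rewrite (bigD1 (Ordinal hcn)) //= big1 ?addr0.
  by rewrite /u /w eqxx mul1r subnK.
move=> i hi; rewrite /u; case: eqP => [e|]; last by rewrite mul0r.
by move: hi; rewrite (_ : i = Ordinal hcn) ?eqxx //; apply: val_inj.
Qed.

Lemma Q_step j : Q j.+1 -> Q j.
Proof.
move=> hQ f hf hv hhk.
case: (eqVneq (f j) 0) => hfj.
  apply: hQ => //; last by move=> a /hhk; lia.
  by move=> i hi; case: (ltngtP i j) => [/hv|//|->] //; lia.
have j0 : (0 < j)%N.
  case: j hQ hv hhk hfj => // _ _ hhk _; have [a /hhk] := HK_nonempty; lia.
have hm : max_ideal R f by split => //; apply: hv.
have : ~ herzog_kunz R j by move=> /hhk; lia.
case: (classic (in_vals (max_ideal_sq R) j)); last first.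
  by move=> hn []; split => //; exists f; split.
case=> g [hg [hgj hgv]] _.
pose c := f j / g j.
pose h : pseries k := fun n => f n - c * g n.
have -> : f = ps_add h (scale c g).
  by apply: functional_extensionality => n; rewrite /ps_add /h /scale subrK.
apply: sq_add; last exact: sq_scale.
apply: hQ.
- have -> : h = ps_add f (ps_opp (ps_mul (ps_const c) g)).
    by apply: functional_extensionality => n; rewrite mul_const /ps_add /ps_opp /h /scale.
  apply: (ab_add hR); first exact: hf.
  apply: (ab_opp hR); apply: (ab_mul hR); first exact: (ab_const hR c).
  exact: sq_R hg.
- move=> i hi; rewrite /h; case: (ltngtP i j) => [hij|hij|->]; [|lia|].
    by rewrite hv // hgv // mulr0 subr0.
  by rewrite /c divfK // subrr.
- by move=> a /hhk; lia.
Qed.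

Lemma Q_all j : Q j.
Proof.
have [c [c0 hc]] := conductor_vanish.
suff : forall m j, (c + c - j <= m)%N -> Q j by apply.
elim=> [|m IH] {}j hj.
  by apply: (@Q_base c c0 hc); lia.
case: (leqP (c + c) j) => hcj; first exact: (@Q_base c c0 hc).
apply: Q_step; apply: IH; lia.
Qed.

End S.

Theorem mainTheorem6 (k : fieldType) (R : pseries k -> Prop)
  (hR : analytic_branch R) (f : pseries k) (hf : R f)
  (hv : f = @ps_zero k \/
        exists n, is_val f n /\ forall a, herzog_kunz R a -> (a < n)%N) :
  max_ideal_sq R f.
Proof.
case: hv => [->|[n [[_ hn] ha]]].
  by exists [::]; split.
move: (@Q_all k R hR n) => hq; exact: (hq f hf hn ha).
Qed.
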